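(* Let $1\le j\le k$ be integers, let $G$ and $H$ be $(j,k)$-bicliques with interesting factors $g(x)$ and $h(x)$, and suppose $g(x)=(-1)^j h(-x+c)$ for some integer $c$. Then $$P_G(c+1)=\binom{c+1}{k}(-1)^{j+k}P_H(-1).$$ In particular, if $G$ and $H$ are complementary $(j,k)$-bicliques, then the number of proper $(j+k)$-colourings of $G$ equals $\binom{j+k}{k}$ times the number of acyclic orientations of $H$.
   Context: All graphs are finite and simple. For integers $1\le j\le k$, a $(j,k)$-biclique is a graph whose vertex set is the disjoint union of a $j$-clique and a $k$-clique, with an arbitrary set of additional edges (bridging edges) each joining a vertex of the $j$-clique to a vertex of the $k$-clique. Two $(j,k)$-bicliques $G,H$ on the same two cliques are complementary if $H$ is obtained from $G$ by replacing every bridging edge by a non-edge and every non-adjacent pair (one vertex in each clique) by an edge. $P_G(x)$ is the chromatic polynomial; $(x)_n=x(x-1)\cdots(x-n+1)$; the interesting factor of a $(j,k)$-biclique $G$ is $P_G(x)/(x)_k$, a polynomial of degree $j$. An acyclic orientation of a graph is an assignment of a direction to each edge producing no directed cycle. (Stanley's theorem, which may be used: for an $n$-vertex graph $F$, $(-1)^nP_F(-1)$ is the number of acyclic orientations of $F$.) *)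

(* Defs.v *)
From HB Require Import structures.
From mathcomp Require Import all_boot all_order all_algebra.
Set Implicit Arguments. Unset Strict Implicit. Unset Printing Implicit Defensive.
Import Order.TTheory GRing.Theory Num.Theory.
Local Open Scope ring_scope.

Definition proper_colourings (V : finType) (e : rel V) (n : nat)
  : {set {ffun V -> 'I_n}} :=
  [set f : {ffun V -> 'I_n} | [forall x, forall y, e x y ==> (f x != f y)]].

Definition is_chromatic_poly (V : finType) (e : rel V) (P : {poly rat}) : Prop :=
  forall n : nat, P.[n%:R] = (#|proper_colourings e n|)%:R.

Definition dir_acyclic (V : finType) (o : {ffun V * V -> bool}) : bool :=
  [forall x, forall y, o (x, y) ==> ~~ connect (fun a b => o (a, b)) y x].

Definition acyclic_orientations (V : finType) (e : rel V) : {set {ffun V * V -> bool}} :=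
  [set o : {ffun V * V -> bool} | [forall x, forall y, (o (x, y) ==> e x y) && (e x y ==> (o (x, y) (+) o (y, x)))]
           && dir_acyclic o].

(* Vertex set: disjoint union of a j-clique ('I_j) and a k-clique ('I_k);
   b a c says that the bridging edge between vertex a of the j-clique and
   vertex c of the k-clique is present. *)
Definition biclique_vert (j k : nat) : finType := ('I_j + 'I_k)%type.

Definition biclique_adj (j k : nat) (b : 'I_j -> 'I_k -> bool)
  : rel (biclique_vert j k) :=
  fun u v =>
    match u, v with
    | inl a, inl a' => a != a'
    | inr c, inr c' => c != c'
    | inl a, inr c => b a c
    | inr c, inl a => b a c
    end.

Definition compl_bridges (j k : nat) (b : 'I_j -> 'I_k -> bool) : 'I_j -> 'I_k -> bool :=
  fun a c => ~~ b a c.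

Definition falling_poly (n : nat) : {poly rat} :=
  \prod_(i < n) ('X - (i%:R)%:P).

Definition binz (z : int) (k : nat) : rat :=
  (\prod_(i < k) (z%:~R - i%:R)) / (k`!)%:R.

(* Main.v *)
Require Import Defs.
From HB Require Import structures.
From mathcomp Require Import all_boot all_order all_algebra.
From Stdlib Require Import Lia Psatz.
Import Order.TTheory GRing.Theory Num.Theory.
Set Implicit Arguments. Unset Strict Implicit. Unset Printing Implicit Defensive.

Lemma card_lt (N a : nat) : a <= N -> #|[set i : 'I_N | i < a]| = a.
Proof.
move=> aN.
have -> : [set i : 'I_N | i < a] = (widen_ord aN) @: [set: 'I_a].
  apply/setP => i; rewrite !inE; apply/idP/imsetP.
  - by move=> ia; exists (Ordinal ia) => //; apply: val_inj.
  - by case=> i' _ ->; rewrite /= ltn_ord.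
by rewrite card_imset ?cardsT ?card_ord //; by move=> x y /(congr1 val) /= /val_inj.
Qed.

Lemma inj_onto_aux (T : finType) (S : {set T}) (g : T -> nat) :
  {in S &, injective g} -> {in S, forall x, g x < #|S|} ->
  (fun x => inord (g x) : 'I_#|S|.+1) @: S = [set i : 'I_#|S|.+1 | i < #|S|].
Proof.
move=> ginj gb.
have GS : {in S, forall x, nat_of_ord (inord (g x) : 'I_#|S|.+1) = g x}.
  by move=> x xS; rewrite inordK // ltnS ltnW // gb.
apply/eqP; rewrite eqEcard; apply/andP; split.
  by apply/subsetP => i /imsetP [x xS ->]; rewrite inE GS // gb.
rewrite card_lt // card_in_imset //.
by move=> x y xS yS /(congr1 (@nat_of_ord _)); rewrite !GS //; apply: ginj.
Qed.

Lemma inj_onto (T : finType) (S : {set T}) (g : T -> nat) :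
  {in S &, injective g} -> {in S, forall x, g x < #|S|} ->
  forall i, i < #|S| -> exists2 y, y \in S & g y = i.
Proof.
move=> ginj gb i iS.
have : (inord i : 'I_#|S|.+1) \in [set i : 'I_#|S|.+1 | i < #|S|].
  by rewrite inE inordK // ltnS ltnW.
rewrite -(inj_onto_aux ginj gb) => /imsetP [y yS /(congr1 (@nat_of_ord _))].
rewrite !inordK ?ltnS ?(ltnW (gb _ yS)) ?(ltnW iS) // => e.
by exists y.
Qed.

Lemma count_below (T : finType) (S : {set T}) (g : T -> nat) :
  {in S &, injective g} -> {in S, forall x, g x < #|S|} ->
  forall x, x \in S -> #|[set y in S | g y < g x]| = g x.
Proof.
move=> ginj gb x xS.
set G := (fun x => inord (g x) : 'I_#|S|.+1).
have GS : {in S, forall x, nat_of_ord (G x) = g x}.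
  by move=> z zS; rewrite /G inordK // ltnS ltnW // gb.
have Ginj : {in S &, injective G}.
  by move=> z y zS yS /(congr1 (@nat_of_ord _)); rewrite !GS //; apply: ginj.
have -> : [set y in S | g y < g x] = [set y in S | G y < g x].
  by apply/setP => y; rewrite !inE; case yS: (y \in S) => //=; rewrite GS.
have -> : #|[set y in S | G y < g x]| = #|G @: [set y in S | G y < g x]|.
  rewrite card_in_imset //; move=> y z; rewrite !inE => /andP[yS _] /andP[zS _].
  exact: Ginj.
have -> : G @: [set y in S | G y < g x] = [set i : 'I_#|S|.+1 | i < g x].
  apply/setP => i; rewrite inE; apply/imsetP/idP.
  - by case=> y; rewrite inE => /andP[_ h] ->.
  - move=> ilt.
    have : i \in [set i : 'I_#|S|.+1 | i < #|S|] by rewrite inE (ltn_trans ilt) ?gb.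
    rewrite -(inj_onto_aux ginj gb) => /imsetP [y yS ey].
    exists y; rewrite ?inE ?yS /=; last by [].
    by rewrite -[G y]/(inord (g y)) -ey.
by apply: card_lt; rewrite ltnW // ltnS ltnW // gb.
Qed.
Lemma tourn_lt (T : finType) (r : rel T) :
  (forall x, ~~ r x x) -> (forall x y z, r x y -> r y z -> r x z) ->
  forall x y, r x y -> #|[set z | r z x]| < #|[set z | r z y]|.
Proof.
move=> irr tr x y rxy; apply: proper_card; apply/properP; split.
  by apply/subsetP => z; rewrite !inE => rzx; apply: tr rzx rxy.
by exists x; rewrite !inE ?irr.
Qed.

Lemma tourn_eq (T : finType) (r : rel T) :
  (forall x, ~~ r x x) -> (forall x y, x != y -> r x y || r y x) ->
  (forall x y z, r x y -> r y z -> r x z) ->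
  forall x y, r x y = (#|[set z | r z x]| < #|[set z | r z y]|).
Proof.
move=> irr tot tr x y; apply/idP/idP; first exact: tourn_lt.
move=> lt; case: (eqVneq x y) => [exy|nxy]; first by rewrite exy ltnn in lt.
case/orP: (tot _ _ nxy) => // ryx.
by have := tourn_lt irr tr ryx; rewrite ltnNge (ltnW lt).
Qed.

Lemma tourn_inj (T : finType) (r : rel T) :
  (forall x, ~~ r x x) -> (forall x y, x != y -> r x y || r y x) ->
  (forall x y z, r x y -> r y z -> r x z) ->
  injective (fun x => #|[set z | r z x]|).
Proof.
move=> irr tot tr x y /= e; apply/eqP; apply/negPn/negP => nxy.
case/orP: (tot _ _ nxy) => h; have := tourn_lt irr tr h; by rewrite e ltnn.
Qed.

Lemma tourn_bound (T : finType) (r : rel T) (x : T) :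
  ~~ r x x -> #|[set z | r z x]| < #|T|.
Proof.
move=> irr; rewrite -cardsT; apply: proper_card; apply/properP; split.
  exact: subsetT.
by exists x; rewrite ?inE.
Qed.

Lemma rank_acyclic (T : finType) (e : rel T) (R : T -> nat) :
  (forall x y, e x y -> R x < R y) -> forall x y, connect e x y -> R x <= R y.
Proof.
move=> H x y /connectP [p pth ->]; elim: p x pth => [|z p IH] x //=.
case/andP => exz pz; exact: leq_trans (ltnW (H _ _ exz)) (IH _ pz).
Qed.

Lemma lt_max_exists (I : finType) (P : pred I) (F : I -> nat) (x : nat) :
  (x < \max_(i | P i) F i) = [exists i, P i && (x < F i)].
Proof.
apply/idP/idP.
  move=> lt; apply/contraT; rewrite negb_exists => /forallP H.
  have : \max_(i | P i) F i <= x.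
    by apply/bigmax_leqP => i Pi; have := H i; rewrite Pi /= -leqNgt.
  by rewrite leqNgt lt.
by case/existsP=> i /andP [Pi lt]; apply: leq_trans lt _; apply: leq_bigmax_cond.
Qed.

Lemma rank_ord_lt (N : nat) (S : {set 'I_N}) (x y : 'I_N) :
  x \in S -> x < y -> #|[set z in S | z < x]| < #|[set z in S | z < y]|.
Proof.
move=> xS xy; apply: proper_card; apply/properP; split.
  by apply/subsetP => z; rewrite !inE => /andP [-> zx]; apply: ltn_trans zx xy.
by exists x; rewrite !inE ?xS ?xy ?ltnn.
Qed.

Lemma rank_ord_le (N : nat) (S : {set 'I_N}) (x y : 'I_N) :
  x <= y -> #|[set z in S | z < x]| <= #|[set z in S | z < y]|.
Proof.
move=> xy; apply: subset_leq_card.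
by apply/subsetP => z; rewrite !inE => /andP [-> zx]; apply: leq_trans zx xy.
Qed.

Definition colT (j k : nat) := {ffun biclique_vert j k -> 'I_(j + k)}.

Definition fv (j k : nat) (f : colT j k) (x : biclique_vert j k) : nat := f x.

Definition inF0 (j k : nat) (bG : 'I_j -> 'I_k -> bool) (f : colT j k) : Prop :=
  (forall c, fv f (inr c) < k) /\ (forall x y, biclique_adj bG x y -> f x != f y).

Definition matched (j k : nat) (f : colT j k) (a : 'I_j) : bool := fv f (inl a) < k.
Definition qf (j k : nat) (f : colT j k) (a : 'I_j) : nat := fv f (inl a) - k.
Definition Qset (j k : nat) (f : colT j k) : {set 'I_j} :=
  [set insubd a (qf f a) | a in [set a | ~~ matched f a]].
Definition Wset (j k : nat) (f : colT j k) : {set 'I_j} := ~: Qset f.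
Definition rankW (j k : nat) (f : colT j k) (w : 'I_j) : nat :=
  #|[set w' in Wset f | w' < w]|.
Definition rf (j k : nat) (f : colT j k) (a : 'I_j) : nat :=
  #|[set a' | matched f a' && (fv f (inl a') < fv f (inl a))]|.
Definition rho (j k : nat) (f : colT j k) (a : 'I_j) : nat :=
  if matched f a then
    (if [pick w in Wset f | rankW f w == rf f a] is Some w then val w else 0)
  else qf f a.
Definition before (j k : nat) (f : colT j k) (c : 'I_k) (a : 'I_j) : bool :=
  [exists a', matched f a' && (rho f a' <= rho f a) && (fv f (inr c) <= fv f (inl a'))].

Definition Psi (j k : nat) (bG : 'I_j -> 'I_k -> bool) (f : colT j k)
  : {ffun biclique_vert j k * biclique_vert j k -> bool} :=
  [ffun p => match p with
   | (inl a, inl a') => rho f a < rho f a'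
   | (inr c, inr c') => fv f (inr c) < fv f (inr c')
   | (inl a, inr c) => ~~ bG a c && ~~ before f c a
   | (inr c, inl a) => ~~ bG a c && before f c a
   end].

Lemma F0_C_inj j k bG (f : colT j k) : inF0 bG f -> injective (fun c => fv f (inr c)).
Proof.
case=> _ pr c c' /= e; apply/eqP/negPn/negP => nc.
by have := pr (inr c) (inr c') nc; rewrite /fv in e; rewrite (val_inj e) eqxx.
Qed.

Lemma F0_A_inj j k bG (f : colT j k) : inF0 bG f -> injective (fun a => fv f (inl a)).
Proof.
case=> _ pr c c' /= e; apply/eqP/negPn/negP => nc.
by have := pr (inl c) (inl c') nc; rewrite /fv in e; rewrite (val_inj e) eqxx.
Qed.

Lemma F0_C_count j k bG (f : colT j k) : inF0 bG f ->
  forall c, #|[set c' | fv f (inr c') < fv f (inr c)]| = fv f (inr c).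
Proof.
move=> Hf c.
have := @count_below _ [set: 'I_k] (fun c => fv f (inr c)).
rewrite cardsT card_ord => H.
rewrite -[in RHS]H //.
- by apply: eq_card => c'; rewrite !inE.
- by move=> x y _ _; apply: (F0_C_inj Hf).
- by move=> x _; case: Hf.
Qed.

Lemma F0_C_onto j k bG (f : colT j k) : inF0 bG f ->
  forall i, i < k -> exists c, fv f (inr c) = i.
Proof.
move=> Hf i ik.
have := @inj_onto _ [set: 'I_k] (fun c => fv f (inr c)).
rewrite cardsT card_ord => H.
case: (H _ _ i ik) => //.
- by move=> x y _ _; apply: (F0_C_inj Hf).
- by move=> x _; case: Hf.
- by move=> c _ e; exists c.
Qed.

Lemma F0_partner j k bG (f : colT j k) : inF0 bG f ->
  forall a, matched f a -> exists c, fv f (inr c) = fv f (inl a).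
Proof. by move=> Hf a ma; apply: (F0_C_onto Hf ma). Qed.

Lemma F0_partner_bridge j k bG (f : colT j k) : inF0 bG f ->
  forall a c, fv f (inr c) = fv f (inl a) -> ~~ bG a c.
Proof.
case=> _ pr a c e; apply/negP => b.
by have := pr (inl a) (inr c) b; rewrite /fv in e; rewrite (val_inj e) eqxx.
Qed.

Lemma F0_q_lt j k bG (f : colT j k) : inF0 bG f ->
  forall a, ~~ matched f a -> qf f a < j.
Proof.
move=> _ a; rewrite /matched /qf -leqNgt => ka.
by rewrite ltn_subLR // addnC /fv ltn_ord.
Qed.

Lemma F0_q_inj j k bG (f : colT j k) : inF0 bG f ->
  forall a a', ~~ matched f a -> ~~ matched f a' -> qf f a = qf f a' -> a = a'.
Proof.
move=> Hf a a'; rewrite /matched /qf -!leqNgt => ka ka' e.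
apply: (F0_A_inj Hf) => /=.
by rewrite -(subnK ka) -(subnK ka') e.
Qed.

Lemma Qset_mem j k bG (f : colT j k) : inF0 bG f ->
  forall i : 'I_j, (i \in Qset f) = [exists a, ~~ matched f a && (qf f a == i)].
Proof.
move=> Hf i; apply/imsetP/existsP.
- case=> a; rewrite inE => na ->; exists a; rewrite na /=.
  by rewrite val_insubd (F0_q_lt Hf na).
- case=> a /andP [na /eqP e]; exists a; rewrite ?inE //.
  by apply: val_inj; rewrite val_insubd (F0_q_lt Hf na).
Qed.

Lemma Qcard j k bG (f : colT j k) : inF0 bG f ->
  #|Qset f| = #|[set a | ~~ matched f a]|.
Proof.
move=> Hf; rewrite card_in_imset //.
move=> a a'; rewrite !inE => na na' /(congr1 val).
rewrite !val_insubd (F0_q_lt Hf na) (F0_q_lt Hf na').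
exact: (F0_q_inj Hf).
Qed.

Lemma Wcard j k bG (f : colT j k) : inF0 bG f ->
  #|Wset f| = #|[set a | matched f a]|.
Proof.
move=> Hf.
have h1 := cardsC (Qset f).
have h2 := cardsC [set a | matched f a].
have e : ~: [set a | matched f a] = [set a | ~~ matched f a].
  by apply/setP => a; rewrite !inE.
rewrite e -(Qcard Hf) in h2.
rewrite /Wset; apply/eqP; rewrite -(eqn_add2l #|Qset f|) h1 addnC h2.
by [].
Qed.

Lemma rankW_inj j k (f : colT j k) : {in Wset f &, injective (rankW f)}.
Proof.
move=> w w' wW w'W e; apply/eqP/negPn/negP => nw.
case: (ltngtP w w') => [lt|lt|eq].
- by have := rank_ord_lt wW lt; rewrite /rankW in e; rewrite e ltnn.
- by have := rank_ord_lt w'W lt; rewrite /rankW in e; rewrite e ltnn.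
- by move: nw; rewrite (val_inj eq) eqxx.
Qed.

Lemma rankW_lt j k (f : colT j k) w : w \in Wset f -> rankW f w < #|Wset f|.
Proof.
move=> wW; apply: proper_card; apply/properP; split.
  by apply/subsetP => z; rewrite inE => /andP [].
by exists w; rewrite // !inE ltnn andbF.
Qed.

Lemma rf_lt j k (f : colT j k) a : matched f a -> rf f a < #|[set a | matched f a]|.
Proof.
move=> ma; apply: proper_card; apply/properP; split.
  by apply/subsetP => z; rewrite !inE => /andP [].
by exists a; rewrite !inE ?ltnn ?andbF.
Qed.

Lemma rf_mono j k (f : colT j k) a a' :
  matched f a -> fv f (inl a) < fv f (inl a') -> rf f a < rf f a'.
Proof.
move=> ma lt; apply: proper_card; apply/properP; split.
  apply/subsetP => z; rewrite !inE => /andP [-> zl] /=.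
  exact: ltn_trans zl lt.
by exists a; rewrite !inE ?ltnn ?andbF // ma lt.
Qed.

Lemma rho_spec j k bG (f : colT j k) : inF0 bG f ->
  forall a, matched f a -> exists2 w, w \in Wset f & (rho f a = w /\ rankW f w = rf f a).
Proof.
move=> Hf a ma; rewrite /rho ma.
case: pickP => [w /andP [wW /eqP e] | none]; first by exists w.
have [w wW e] : exists2 w, w \in Wset f & rankW f w = rf f a.
  apply: (@inj_onto _ (Wset f) (rankW f)).
  - exact: rankW_inj.
  - by move=> w wW; apply: rankW_lt.
  - by rewrite (Wcard Hf); apply: rf_lt.
by have := none w; rewrite wW e eqxx.
Qed.

Lemma rho_mono j k bG (f : colT j k) : inF0 bG f ->
  forall a a', matched f a -> matched f a' -> fv f (inl a) < fv f (inl a') -> rho f a < rho f a'.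
Proof.
move=> Hf a a' ma ma' lt.
have [w wW [-> rw]] := rho_spec Hf ma.
have [w' w'W [-> rw']] := rho_spec Hf ma'.
have := rf_mono ma lt; rewrite -rw -rw' => rlt.
rewrite ltnNge; apply/negP => le.
by have := @rank_ord_le _ (Wset f) _ _ le; rewrite /rankW in rlt *; rewrite leqNgt rlt.
Qed.

Lemma rho_lt j k bG (f : colT j k) : inF0 bG f -> forall a, rho f a < j.
Proof.
move=> Hf a; case ma: (matched f a).
  by have [w _ [-> _]] := rho_spec Hf ma.
by rewrite /rho ma; apply: (F0_q_lt Hf); rewrite ma.
Qed.

Lemma rho_W j k bG (f : colT j k) : inF0 bG f ->
  forall a a', matched f a -> ~~ matched f a' -> rho f a != rho f a'.
Proof.
move=> Hf a a' ma na'.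
have [w wW [-> _]] := rho_spec Hf ma.
rewrite /rho (negbTE na'); apply/eqP => e.
move: wW; rewrite inE (Qset_mem Hf); case/existsP; exists a'.
by rewrite na' /= e.
Qed.

Lemma rho_inj j k bG (f : colT j k) : inF0 bG f -> injective (rho f).
Proof.
move=> Hf a a' e.
case ma: (matched f a); case ma': (matched f a').
- apply: (F0_A_inj Hf) => /=; case: (ltngtP (fv f (inl a)) (fv f (inl a'))) => // lt.
  + by have := rho_mono Hf ma ma' lt; rewrite e ltnn.
  + by have := rho_mono Hf ma' ma lt; rewrite e ltnn.
- by have := rho_W Hf ma (negbT ma'); rewrite e eqxx.
- by have := rho_W Hf ma' (negbT ma); rewrite e eqxx.
- by move: e; rewrite /rho ma ma'; apply: (F0_q_inj Hf); rewrite ?ma ?ma'.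
Qed.

Lemma rho_count j k bG (f : colT j k) : inF0 bG f ->
  forall a, #|[set a' | rho f a' < rho f a]| = rho f a.
Proof.
move=> Hf a.
have := @count_below _ [set: 'I_j] (rho f).
rewrite cardsT card_ord => H.
rewrite -[in RHS]H //.
- by apply: eq_card => c'; rewrite !inE.
- by move=> x y _ _; apply: (rho_inj Hf).
- by move=> x _; apply: (rho_lt Hf).
Qed.

Definition Pmax (j k : nat) (f : colT j k) (a : 'I_j) : nat :=
  \max_(a' | matched f a' && (rho f a' <= rho f a)) (fv f (inl a')).+1.

Lemma before_max j k (f : colT j k) c a : before f c a = (fv f (inr c) < Pmax f a).
Proof.
rewrite /Pmax lt_max_exists /before; apply: eq_existsb => a'.
by rewrite ltnS.
Qed.

Lemma Pmax_mono j k (f : colT j k) a a' : rho f a <= rho f a' -> Pmax f a <= Pmax f a'.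
Proof.
move=> le; apply/bigmax_leqP => i /andP [mi li].
by apply: (leq_bigmax_cond (P := fun i => matched f i && (rho f i <= rho f a'))); rewrite mi (leq_trans li le).
Qed.

Definition keyR (j k : nat) (f : colT j k) (x : biclique_vert j k) : nat :=
  match x with
  | inl a => (Pmax f a * 2 + 1) * j.+1 + rho f a
  | inr c => (fv f (inr c)).+1 * 2 * j.+1
  end.

Lemma ar1 (P P' r r' J : nat) : P <= P' -> r < r' -> (P*2+1)*J + r < (P'*2+1)*J + r'.
Proof. move=> /ssrnat.leP h1 /ssrnat.ltP h2; apply/ssrnat.ltP; rewrite -?plusE -?multE. nia. Qed.
Lemma ar2 (P x r J : nat) : 0 < J -> x < P -> x.+1*2*J < (P*2+1)*J + r.
Proof. move=> /ssrnat.ltP h0 /ssrnat.ltP h1; apply/ssrnat.ltP; rewrite -?plusE -?multE. nia. Qed.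
Lemma ar3 (P x r J : nat) : P <= x -> r < J -> (P*2+1)*J + r < x.+1*2*J.
Proof. move=> /ssrnat.leP h0 /ssrnat.ltP h1; apply/ssrnat.ltP; rewrite -?plusE -?multE. nia. Qed.
Lemma ar4 (x y J : nat) : 0 < J -> x < y -> x.+1*2*J < y.+1*2*J.
Proof. move=> /ssrnat.ltP h0 /ssrnat.ltP h1; apply/ssrnat.ltP; rewrite -?plusE -?multE. nia. Qed.

Lemma Psi_key j k bG (f : colT j k) : inF0 bG f ->
  forall x y, Psi bG f (x, y) -> keyR f x < keyR f y.
Proof.
move=> Hf x y; rewrite ffunE.
case: x => [a|c]; case: y => [a'|c'] /=.
- by move=> lt; apply: (ar1 _ (Pmax_mono (ltnW lt)) lt).
- case/andP => _; rewrite before_max -leqNgt => le.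
  by apply: ar3 le _; rewrite ltnS ltnW // (rho_lt Hf).
- by case/andP => _; rewrite before_max => lt; apply: ar2.
- by move=> lt; apply: ar4.
Qed.

Lemma Psi_AO j k bG (f : colT j k) : inF0 bG f ->
  Psi bG f \in acyclic_orientations (biclique_adj (compl_bridges bG)).
Proof.
move=> Hf; rewrite inE; apply/andP; split.
  apply/forallP => x; apply/forallP => y; rewrite !ffunE.
  case: x => [a|c]; case: y => [a'|c'] /=; rewrite /compl_bridges.
  - apply/andP; split; apply/implyP.
      by move=> lt; apply/eqP => e; rewrite e ltnn in lt.
    move=> ne; have : rho f a != rho f a'.
      by apply: contra ne => /eqP /(rho_inj Hf) ->.
    by case: ltngtP.
  - by case: (bG a c'); case: (before f c' a).
  - by case: (bG a' c); case: (before f c a').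
  - apply/andP; split; apply/implyP.
      by move=> lt; apply/eqP => e; rewrite e ltnn in lt.
    move=> ne; have : fv f (inr c) != fv f (inr c').
      by apply: contra ne => /eqP /(F0_C_inj Hf) ->.
    by case: ltngtP.
apply/forallP => x; apply/forallP => y; apply/implyP => oxy; apply/negP => con.
have := rank_acyclic (e := fun a b => Psi bG f (a, b)) (R := keyR f) (Psi_key Hf) con.
by rewrite leqNgt (Psi_key Hf oxy).
Qed.

Definition ortT (j k : nat) := {ffun biclique_vert j k * biclique_vert j k -> bool}.

Definition inAO (j k : nat) (bG : 'I_j -> 'I_k -> bool) (o : ortT j k) : bool :=
  o \in acyclic_orientations (biclique_adj (compl_bridges bG)).

Lemma AO_edge j k bG (o : ortT j k) : inAO bG o ->
  forall x y, o (x, y) -> biclique_adj (compl_bridges bG) x y.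
Proof.
by rewrite /inAO inE => /andP [/forallP H _] x y; have /forallP := H x => /(_ y) /andP [/implyP].
Qed.

Lemma AO_xor j k bG (o : ortT j k) : inAO bG o ->
  forall x y, biclique_adj (compl_bridges bG) x y -> o (x, y) (+) o (y, x).
Proof.
by rewrite /inAO inE => /andP [/forallP H _] x y; have /forallP := H x => /(_ y) /andP [_ /implyP].
Qed.

Lemma AO_acyc j k bG (o : ortT j k) : inAO bG o ->
  forall x y, o (x, y) -> ~~ connect (fun a b => o (a, b)) y x.
Proof.
rewrite /inAO inE => /andP [_ /forallP H] x y.
by have /forallP := H x => /(_ y) /implyP.
Qed.

Lemma AO_trans j k bG (o : ortT j k) : inAO bG o ->
  forall x y z, o (x, y) -> o (y, z) -> (x != z -> biclique_adj (compl_bridges bG) x z) ->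
  o (x, z).
Proof.
move=> Ho x y z oxy oyz adj.
case: (eqVneq x z) => [exz | nxz].
  by subst z; have := AO_acyc Ho oxy; rewrite connect1.
have := AO_xor Ho (adj nxz); case ozx: (o (z, x)); rewrite ?addbT ?addbF // => _.
have := AO_acyc Ho oxy.
by rewrite (connect_trans (connect1 (e := fun a b => o (a, b)) oyz) (connect1 (e := fun a b => o (a, b)) ozx)).
Qed.

Definition sig (j k : nat) (o : ortT j k) (a : 'I_j) : nat := #|[set a' | o (inl a', inl a)]|.
Definition tau (j k : nat) (o : ortT j k) (c : 'I_k) : nat := #|[set c' | o (inr c', inr c)]|.

Lemma rA_irr j k bG (o : ortT j k) : inAO bG o -> forall a, ~~ o (inl a, inl a).
Proof. by move=> Ho a; apply/negP => /(AO_edge Ho) /=; rewrite eqxx. Qed.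
Lemma rC_irr j k bG (o : ortT j k) : inAO bG o -> forall c, ~~ o (inr c, inr c).
Proof. by move=> Ho a; apply/negP => /(AO_edge Ho) /=; rewrite eqxx. Qed.

Lemma rA_tot j k bG (o : ortT j k) : inAO bG o ->
  forall a a', a != a' -> o (inl a, inl a') || o (inl a', inl a).
Proof.
by move=> Ho a a' ne; have := AO_xor (x := inl a) (y := inl a') Ho ne; case: (o _); case: (o _).
Qed.
Lemma rC_tot j k bG (o : ortT j k) : inAO bG o ->
  forall a a', a != a' -> o (inr a, inr a') || o (inr a', inr a).
Proof.
by move=> Ho a a' ne; have := AO_xor (x := inr a) (y := inr a') Ho ne; case: (o _); case: (o _).
Qed.

Lemma rA_trans j k bG (o : ortT j k) : inAO bG o ->
  forall a b c, o (inl a, inl b) -> o (inl b, inl c) -> o (inl a, inl c).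
Proof. by move=> Ho a b c h1 h2; apply: (AO_trans Ho h1 h2). Qed.
Lemma rC_trans j k bG (o : ortT j k) : inAO bG o ->
  forall a b c, o (inr a, inr b) -> o (inr b, inr c) -> o (inr a, inr c).
Proof. by move=> Ho a b c h1 h2; apply: (AO_trans Ho h1 h2). Qed.

Lemma sig_lt j k bG (o : ortT j k) : inAO bG o ->
  forall a a', o (inl a, inl a') = (sig o a < sig o a').
Proof.
move=> Ho a a'.
exact: (@tourn_eq _ (fun a a' => o (inl a, inl a')) (rA_irr Ho) (rA_tot Ho) (rA_trans Ho)).
Qed.
Lemma tau_lt j k bG (o : ortT j k) : inAO bG o ->
  forall a a', o (inr a, inr a') = (tau o a < tau o a').
Proof.
move=> Ho a a'.
exact: (@tourn_eq _ (fun a a' => o (inr a, inr a')) (rC_irr Ho) (rC_tot Ho) (rC_trans Ho)).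
Qed.
Lemma sig_inj j k bG (o : ortT j k) : inAO bG o -> injective (sig o).
Proof.
move=> Ho.
exact: (@tourn_inj _ (fun a a' => o (inl a, inl a')) (rA_irr Ho) (rA_tot Ho) (rA_trans Ho)).
Qed.
Lemma tau_inj j k bG (o : ortT j k) : inAO bG o -> injective (tau o).
Proof.
move=> Ho.
exact: (@tourn_inj _ (fun a a' => o (inr a, inr a')) (rC_irr Ho) (rC_tot Ho) (rC_trans Ho)).
Qed.
Lemma sig_bound j k bG (o : ortT j k) : inAO bG o -> forall a, sig o a < j.
Proof.
move=> Ho a.
by have := (@tourn_bound _ (fun a a' => o (inl a, inl a')) _ (rA_irr Ho a)); rewrite card_ord.
Qed.
Lemma tau_bound j k bG (o : ortT j k) : inAO bG o -> forall c, tau o c < k.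
Proof.
move=> Ho a.
by have := (@tourn_bound _ (fun a a' => o (inr a, inr a')) _ (rC_irr Ho a)); rewrite card_ord.
Qed.

Definition To (j k : nat) (bG : 'I_j -> 'I_k -> bool) (o : ortT j k) a c : bool :=
  ~~ bG a c && o (inr c, inl a).
Definition Xo (j k : nat) (bG : 'I_j -> 'I_k -> bool) (o : ortT j k) a c : bool :=
  To bG o a c && [forall a', forall c',
    (To bG o a' c' && (sig o a' <= sig o a) && (tau o c <= tau o c')) ==> ((a' == a) && (c' == c))].

Lemma Xo_To j k bG (o : ortT j k) a c : Xo bG o a c -> To bG o a c.
Proof. by case/andP. Qed.

Lemma Xo_max j k bG (o : ortT j k) a c a' c' : Xo bG o a c -> To bG o a' c' ->
  sig o a' <= sig o a -> tau o c <= tau o c' -> a' = a /\ c' = c.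
Proof.
case/andP => _ /forallP H T' h1 h2.
have /forallP := H a' => /(_ c'); rewrite T' h1 h2 /= => /andP [/eqP -> /eqP ->].
by [].
Qed.

Lemma Xo_uniq_c j k bG (o : ortT j k) : inAO bG o ->
  forall a c c', Xo bG o a c -> Xo bG o a c' -> c = c'.
Proof.
move=> Ho a c c' X1 X2.
case: (leqP (tau o c) (tau o c')) => le.
  by have [_ ->] := Xo_max X1 (Xo_To X2) (leqnn _) le.
by have [_ ->] := Xo_max X2 (Xo_To X1) (leqnn _) (ltnW le).
Qed.

Lemma Xo_uniq_a j k bG (o : ortT j k) : inAO bG o ->
  forall a a' c, Xo bG o a c -> Xo bG o a' c -> a = a'.
Proof.
move=> Ho a a' c X1 X2.
case: (leqP (sig o a') (sig o a)) => le.
  by have [-> _] := Xo_max X1 (Xo_To X2) le (leqnn _).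
by have [-> _] := Xo_max X2 (Xo_To X1) (ltnW le) (leqnn _).
Qed.

Lemma Xo_mono j k bG (o : ortT j k) : inAO bG o ->
  forall a c a' c', Xo bG o a c -> Xo bG o a' c' -> sig o a < sig o a' -> tau o c < tau o c'.
Proof.
move=> Ho a c a' c' X1 X2 lt; rewrite ltnNge; apply/negP => le.
have [e _] := Xo_max X2 (Xo_To X1) (ltnW lt) le.
by rewrite e ltnn in lt.
Qed.

Lemma ar5 (x1 x2 y1 y2 j : nat) : x2 <= x1 -> y1 <= y2 -> y2 + (j - x2) <= y1 + (j - x1) ->
  x1 < j -> x2 < j -> x2 = x1 /\ y2 = y1.
Proof.
move=> /ssrnat.leP h1 /ssrnat.leP h2 /ssrnat.leP h3 /ssrnat.ltP h4 /ssrnat.ltP h5.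
rewrite -?minusE -?plusE in h3. lia.
Qed.

Lemma Xo_exists j k bG (o : ortT j k) : inAO bG o ->
  forall a c, To bG o a c -> exists a', exists c',
    [/\ Xo bG o a' c', sig o a' <= sig o a & tau o c <= tau o c'].
Proof.
move=> Ho a c Tac.
pose P := fun p : 'I_j * 'I_k => To bG o p.1 p.2 && (sig o p.1 <= sig o a) && (tau o c <= tau o p.2).
pose F := fun p : 'I_j * 'I_k => tau o p.2 + (j - sig o p.1).
have P0 : P (a, c) by rewrite /P /= Tac !leqnn.
case: (@arg_maxnP _ (a, c) P F P0) => [[a' c']] /andP [/andP [T' h1] h2] /= mx.
exists a', c'; split => //.
rewrite /Xo T' /=; apply/forallP => a''; apply/forallP => c''; apply/implyP.
case/andP => /andP [T'' g1] g2.
have := mx (a'', c''); rewrite /P /= T'' (leq_trans g1 h1) (leq_trans h2 g2) /F /= => /(_ isT) hF.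
have b1 := sig_bound Ho a'; have b2 := sig_bound Ho a''.
have [e1 e2] := ar5 g1 g2 hF b1 b2.
by rewrite (sig_inj Ho e1) (tau_inj Ho e2) !eqxx.
Qed.

Definition Phi (j k : nat) (bG : 'I_j -> 'I_k -> bool) (d : 'I_(j + k)) (o : ortT j k)
  : colT j k :=
  [ffun x => match x with
   | inl a => insubd d (if [pick c | Xo bG o a c] is Some c then tau o c else k + sig o a)
   | inr c => insubd d (tau o c)
   end].

Lemma Phi_C j k bG d (o : ortT j k) : inAO bG o ->
  forall c, fv (Phi bG d o) (inr c) = tau o c.
Proof.
move=> Ho c; rewrite /fv ffunE val_insubd.
by rewrite (leq_trans (tau_bound Ho c)) // leq_addl.
Qed.

Lemma Phi_A j k bG d (o : ortT j k) : inAO bG o ->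
  forall a, (exists2 c, Xo bG o a c & fv (Phi bG d o) (inl a) = tau o c) \/
            ((forall c, ~~ Xo bG o a c) /\ fv (Phi bG d o) (inl a) = k + sig o a).
Proof.
move=> Ho a; rewrite /fv ffunE val_insubd.
case: pickP => [c Xc | nX].
  left; exists c => //.
  by rewrite (leq_trans (tau_bound Ho c)) // leq_addl.
right; split; first by move=> c; rewrite nX.
by rewrite addnC ltn_add2r (sig_bound Ho).
Qed.

Lemma Phi_F0 j k bG d (o : ortT j k) : inAO bG o -> inF0 bG (Phi bG d o).
Proof.
move=> Ho; split; first by move=> c; rewrite (Phi_C d Ho) (tau_bound Ho).
have hneq : forall x y, fv (Phi bG d o) x != fv (Phi bG d o) y -> Phi bG d o x != Phi bG d o y.
  by move=> x y; apply: contra => /eqP e; rewrite /fv e.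
move=> x y adj; apply: hneq.
case: x adj => [a|c]; case: y => [a'|c'] /= adj.
- case: (Phi_A d Ho a) => [[c Xc ->] | [nX ->]];
  case: (Phi_A d Ho a') => [[c' Xc' ->] | [nX' ->]].
  + apply/eqP => /(tau_inj Ho) e; subst c'.
    by move: adj; rewrite (Xo_uniq_a Ho Xc Xc') eqxx.
  + by rewrite neq_ltn (leq_trans (tau_bound Ho c)) ?leq_addr.
  + by rewrite neq_ltn (leq_trans (tau_bound Ho c')) ?leq_addr ?orbT.
  + by rewrite eqn_add2l; apply: contra adj => /eqP /(sig_inj Ho) ->.
- rewrite (Phi_C d Ho).
  case: (Phi_A d Ho a) => [[c Xc ->] | [nX ->]].
  + apply/eqP => /(tau_inj Ho) e; subst c'.
    by move: (Xo_To Xc); rewrite /To adj.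
  + by rewrite neq_ltn (leq_trans (tau_bound Ho c')) ?leq_addr ?orbT.
- rewrite (Phi_C d Ho).
  case: (Phi_A d Ho a') => [[c' Xc ->] | [nX ->]].
  + apply/eqP => /(tau_inj Ho) e; subst c'.
    by move: (Xo_To Xc); rewrite /To adj.
  + by rewrite neq_ltn (leq_trans (tau_bound Ho c)) ?leq_addr.
- by rewrite !(Phi_C d Ho); apply: contra adj => /eqP /(tau_inj Ho) ->.
Qed.

Lemma Phi_matched j k bG d (o : ortT j k) : inAO bG o ->
  forall a, matched (Phi bG d o) a = [exists c, Xo bG o a c].
Proof.
move=> Ho a; rewrite /matched.
case: (Phi_A d Ho a) => [[c Xc ->] | [nX ->]].
  by rewrite (tau_bound Ho); symmetry; apply/existsP; exists c.
rewrite ltnNge leq_addr /=; symmetry; apply/existsP => [[c]]; by rewrite (negbTE (nX c)).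
Qed.

Lemma Phi_qf j k bG d (o : ortT j k) : inAO bG o ->
  forall a, ~~ matched (Phi bG d o) a -> qf (Phi bG d o) a = sig o a.
Proof.
move=> Ho a; rewrite /qf /matched.
case: (Phi_A d Ho a) => [[c Xc ->] | [nX ->]].
  by rewrite (tau_bound Ho).
by rewrite addKn.
Qed.

Lemma Phi_fv_sig j k bG d (o : ortT j k) : inAO bG o ->
  forall a a', matched (Phi bG d o) a -> matched (Phi bG d o) a' ->
  (fv (Phi bG d o) (inl a') < fv (Phi bG d o) (inl a)) = (sig o a' < sig o a).
Proof.
move=> Ho a a' ma ma'.
case: (Phi_A d Ho a) => [[c Xc ->] | [nX e]]; last first.
  by move: ma; rewrite /matched e ltnNge leq_addr.
case: (Phi_A d Ho a') => [[c' Xc' ->] | [nX e]]; last first.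
  by move: ma'; rewrite /matched e ltnNge leq_addr.
apply/idP/idP => lt; last exact: (Xo_mono Ho Xc' Xc lt).
case: (ltngtP (sig o a') (sig o a)) => // h.
  by have := Xo_mono Ho Xc Xc' h; rewrite ltnNge (ltnW lt).
have ea := sig_inj Ho h; subst a'.
by rewrite (Xo_uniq_c Ho Xc Xc') ltnn in lt.
Qed.

Lemma Phi_W j k bG d (o : ortT j k) : inAO bG o ->
  forall (a a' : 'I_j), matched (Phi bG d o) a' -> insubd a (sig o a') \in Wset (Phi bG d o).
Proof.
move=> Ho a a' ma'.
have Hf := Phi_F0 d Ho.
rewrite inE (Qset_mem Hf) negb_exists; apply/forallP => a''.
rewrite negb_and negbK; case m'': (matched (Phi bG d o) a'') => //=.
rewrite (Phi_qf Ho) ?m'' // val_insubd (sig_bound Ho).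
by apply: contraFN m'' => /eqP /(sig_inj Ho) ->.
Qed.

Lemma Phi_rho j k bG d (o : ortT j k) : inAO bG o ->
  forall a, rho (Phi bG d o) a = sig o a.
Proof.
move=> Ho a.
have Hf := Phi_F0 d Ho.
case ma: (matched (Phi bG d o) a); last by rewrite /rho ma (Phi_qf Ho) ?ma.
have [w wW [-> rw]] := rho_spec Hf ma.
set s := insubd a (sig o a).
have vs : val s = sig o a by rewrite val_insubd (sig_bound Ho).
have sW : s \in Wset (Phi bG d o) by apply: Phi_W.
suff rs : rankW (Phi bG d o) s = rf (Phi bG d o) a.
  by rewrite -vs; congr val; apply: (rankW_inj wW sW); rewrite rw rs.
rewrite /rankW /rf.
have -> : [set w' in Wset (Phi bG d o) | w' < s] =
          (fun a' => insubd a (sig o a')) @: [set a' | matched (Phi bG d o) a' && (fv (Phi bG d o) (inl a') < fv (Phi bG d o) (inl a))].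
  apply/setP => w'; rewrite inE; apply/andP/imsetP.
  - case=> w'W w's.
    have [a'' _ e''] : exists2 a'', a'' \in [set: 'I_j] & sig o a'' = w'.
      apply: (@inj_onto _ [set: 'I_j] (sig o)).
      + by move=> x y _ _; apply: (sig_inj Ho).
      + by move=> x _; rewrite cardsT card_ord (sig_bound Ho).
      + by rewrite cardsT card_ord.
    case m'': (matched (Phi bG d o) a''); last first.
      move: w'W; rewrite inE (Qset_mem Hf); case/existsP; exists a''.
      by rewrite m'' /= (Phi_qf Ho) ?e'' ?m''.
    exists a''; first by rewrite inE m'' (Phi_fv_sig Ho ma m'') e'' -vs.
    by apply: val_inj; rewrite val_insubd (sig_bound Ho) e''.
  - case=> a''; rewrite inE => /andP [m'' lt] ->; split; first exact: Phi_W.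
    by rewrite val_insubd (sig_bound Ho) vs -(Phi_fv_sig Ho ma m'').
rewrite card_in_imset //.
move=> x y _ _ /(congr1 val); rewrite !val_insubd !(sig_bound Ho).
exact: (sig_inj Ho).
Qed.

Lemma Phi_A_X j k bG d (o : ortT j k) : inAO bG o ->
  forall a c, Xo bG o a c -> fv (Phi bG d o) (inl a) = tau o c.
Proof.
move=> Ho a c Xc.
case: (Phi_A d Ho a) => [[c' Xc' ->] | [nX _]]; first by rewrite (Xo_uniq_c Ho Xc' Xc).
by have := nX c; rewrite Xc.
Qed.

Lemma conn_le_C j k bG (o : ortT j k) : inAO bG o ->
  forall c c', tau o c <= tau o c' -> connect (fun a b => o (a, b)) (inr c) (inr c').
Proof.
move=> Ho c c'; case: ltngtP => // [lt | eq] _.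
  by apply: connect1; rewrite (tau_lt Ho).
by rewrite (tau_inj Ho eq) connect0.
Qed.

Lemma conn_le_A j k bG (o : ortT j k) : inAO bG o ->
  forall a a', sig o a <= sig o a' -> connect (fun a b => o (a, b)) (inl a) (inl a').
Proof.
move=> Ho c c'; case: ltngtP => // [lt | eq] _.
  by apply: connect1; rewrite (sig_lt Ho).
by rewrite (sig_inj Ho eq) connect0.
Qed.

Lemma Phi_before j k bG d (o : ortT j k) : inAO bG o ->
  forall a c, ~~ bG a c -> before (Phi bG d o) c a = o (inr c, inl a).
Proof.
move=> Ho a c nb; rewrite /before; apply/existsP/idP.
- case=> a' /andP [/andP [ma' le] le2]; rewrite !(Phi_rho d Ho) in le.
  rewrite (Phi_C d Ho) in le2.
  case: (Phi_A d Ho a') => [[c' Xc' e] | [nX e]]; last first.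
    by move: ma'; rewrite /matched e ltnNge leq_addr.
  rewrite e in le2.
  apply/negPn/negP => noca.
  have oac : o (inl a, inr c).
    by have := AO_xor (x := inl a) (y := inr c) Ho nb; rewrite (negbTE noca) addbF.
  have := AO_acyc Ho oac.
  rewrite (connect_trans (conn_le_C Ho le2)) //.
  have o1 : o (inr c', inl a') by case/andP: (Xo_To Xc').
  exact: connect_trans (connect1 (e := fun a b => o (a, b)) o1) (conn_le_A Ho le).
- move=> oca.
  have Tac : To bG o a c by rewrite /To nb oca.
  have [a' [c' [Xc' le1 le2]]] := Xo_exists Ho Tac.
  exists a'.
  rewrite /matched (Phi_A_X d Ho Xc') (tau_bound Ho) !(Phi_rho d Ho) le1 /=.
  by rewrite (Phi_C d Ho).
Qed.

Lemma Psi_Phi j k bG d (o : ortT j k) : inAO bG o -> Psi bG (Phi bG d o) = o.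
Proof.
move=> Ho; apply/ffunP => [[x y]]; rewrite ffunE.
case: x => [a|c]; case: y => [a'|c'] /=.
- by rewrite !(Phi_rho d Ho) (sig_lt Ho).
- case b: (bG a c') => /=.
    by apply/esym/negbTE/negP => /(AO_edge Ho) /=; rewrite /compl_bridges b.
  rewrite (Phi_before d Ho) ?b //.
  have := AO_xor (x := inl a) (y := inr c') Ho; rewrite /= /compl_bridges b => /(_ isT).
  by case: (o (inl a, inr c')); case: (o (inr c', inl a)).
- case b: (bG a' c) => /=.
    by apply/esym/negbTE/negP => /(AO_edge Ho) /=; rewrite /compl_bridges b.
  by rewrite (Phi_before d Ho) ?b.
- by rewrite !(Phi_C d Ho) (tau_lt Ho).
Qed.

Lemma sig_Psi j k bG (f : colT j k) : inF0 bG f -> forall a, sig (Psi bG f) a = rho f a.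
Proof.
move=> Hf a; rewrite /sig -(rho_count Hf a); apply: eq_card => a'.
by rewrite !inE ffunE.
Qed.

Lemma tau_Psi j k bG (f : colT j k) : inF0 bG f -> forall c, tau (Psi bG f) c = fv f (inr c).
Proof.
move=> Hf c; rewrite /tau -(F0_C_count Hf c); apply: eq_card => c'.
by rewrite !inE ffunE.
Qed.

Lemma To_Psi j k bG (f : colT j k) a c : To bG (Psi bG f) a c = ~~ bG a c && before f c a.
Proof. by rewrite /To ffunE /=; case: (bG a c). Qed.

Lemma Xo_Psi j k bG (f : colT j k) : inF0 bG f ->
  forall a c, Xo bG (Psi bG f) a c = (fv f (inl a) == fv f (inr c)).
Proof.
move=> Hf a c; rewrite /Xo To_Psi; apply/idP/eqP.
- case/andP => /andP [nb /existsP [a'' /andP [/andP [ma'' le1] le2]]] /forallP H.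
  have [c'' ec''] := F0_partner Hf ma''.
  have := H a'' => /forallP /(_ c''); rewrite To_Psi (F0_partner_bridge Hf ec'') /=.
  rewrite !(sig_Psi Hf) !(tau_Psi Hf) le1 ec'' le2 andbT.
  have -> : before f c'' a''.
    by apply/existsP; exists a''; rewrite ma'' leqnn ec'' leqnn.
  by case/andP => /eqP ea /eqP ec; rewrite -ea -ec ec''.
- move=> e.
  have ma : matched f a by rewrite /matched e; case: Hf.
  rewrite (F0_partner_bridge Hf (esym e)) /=.
  apply/andP; split.
    by apply/existsP; exists a; rewrite ma leqnn e leqnn.
  apply/forallP => a'; apply/forallP => c'; apply/implyP.
  rewrite To_Psi !(sig_Psi Hf) !(tau_Psi Hf).
  case/andP => /andP [/andP [_ /existsP [a'' /andP [/andP [ma'' l1] l2]]] l3] l4.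
  have h1 : fv f (inl a'') <= fv f (inl a).
    rewrite leqNgt; apply/negP => lt.
    have := rho_mono Hf ma ma'' lt.
    by rewrite ltnNge (leq_trans l1 l3).
  have h2 : fv f (inl a'') = fv f (inl a).
    apply/eqP; rewrite eqn_leq h1 e /=.
    exact: leq_trans l4 l2.
  have ea := F0_A_inj Hf h2; subst a''.
  have ea' : a' = a.
    by apply: (rho_inj Hf); apply/eqP; rewrite eqn_leq l3 l1.
  subst a'.
  have ec : fv f (inr c') = fv f (inr c).
    by apply/eqP; rewrite eqn_leq -e l2 e l4.
  by rewrite (F0_C_inj Hf ec) !eqxx.
Qed.

Lemma Phi_Psi j k bG d (f : colT j k) : inF0 bG f -> Phi bG d (Psi bG f) = f.
Proof.
move=> Hf; apply/ffunP => x; apply: val_inj; rewrite ffunE.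
case: x => [a|c]; rewrite /= val_insubd.
- case: pickP => [c Xc | nX].
    move: Xc; rewrite (Xo_Psi Hf) => /eqP e.
    by rewrite (tau_Psi Hf) -e /fv ltn_ord.
  have na : ~~ matched f a.
    apply/negP => ma; have [c ec] := F0_partner Hf ma.
    by have := nX c; rewrite (Xo_Psi Hf) ec eqxx.
  have ka : k <= fv f (inl a) by rewrite leqNgt.
  rewrite (sig_Psi Hf) /rho (negbTE na) /qf subnKC //.
  by rewrite /fv ltn_ord.
- by rewrite (tau_Psi Hf) /fv ltn_ord.
Qed.

Definition F0set (j k : nat) (bG : 'I_j -> 'I_k -> bool) : {set colT j k} :=
  [set f : colT j k | (f \in proper_colourings (biclique_adj bG) (j + k)) &&
                      [forall c, f (inr c) < k]].

Lemma F0setP j k bG (f : colT j k) : reflect (inF0 bG f) (f \in F0set bG).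
Proof.
rewrite !inE; apply: (iffP andP).
- case=> /forallP H /forallP Hc; split; first by move=> c; apply: Hc.
  by move=> x y adj; have /forallP := H x => /(_ y) /implyP; apply.
- case=> Hc H; split; last by apply/forallP => c; apply: Hc.
  by apply/forallP => x; apply/forallP => y; apply/implyP; apply: H.
Qed.

Lemma card_AO_F0 j k (bG : 'I_j -> 'I_k -> bool) (d : 'I_(j + k)) :
  #|acyclic_orientations (biclique_adj (compl_bridges bG))| = #|F0set bG|.
Proof.
apply/eqP; rewrite eqn_leq; apply/andP; split.
- rewrite -(@card_in_imset _ _ (Phi bG d)).
    apply: subset_leq_card; apply/subsetP => f /imsetP [o Ho ->].
    by apply/F0setP; apply: Phi_F0.
  move=> o1 o2 H1 H2 e.
  by rewrite -(Psi_Phi d H1) -(Psi_Phi d H2) e.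
- rewrite -(@card_in_imset _ _ (Psi bG)).
    apply: subset_leq_card; apply/subsetP => o /imsetP [f /F0setP Hf ->].
    exact: Psi_AO.
  move=> f1 f2 /F0setP H1 /F0setP H2 e.
  by rewrite -(Phi_Psi d H1) -(Phi_Psi d H2) e.
Qed.

Lemma rank_lt_card (N : nat) (S : {set 'I_N}) (x : 'I_N) :
  x \in S -> #|[set y in S | y < x]| < #|S|.
Proof.
move=> xS; apply: proper_card; apply/properP; split.
  by apply/subsetP => z; rewrite inE => /andP [].
by exists x; rewrite // inE ltnn andbF.
Qed.

Definition relab (n k : nat) (d : 'I_n) (S : {set 'I_n}) (x : 'I_n) : 'I_n :=
  insubd d (if x \in S then #|[set y in S | y < x]| else k + #|[set y in ~: S | y < x]|).

Lemma relab_val n k (d : 'I_n) (S : {set 'I_n}) x : #|S| = k ->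
  val (relab k d S x) = (if x \in S then #|[set y in S | y < x]| else k + #|[set y in ~: S | y < x]|).
Proof.
move=> Sk; rewrite val_insubd.
case xS: (x \in S).
  have hSn : #|S| <= n by rewrite -[X in _ <= X]card_ord max_card.
  by rewrite ifT // (leq_trans (rank_lt_card xS)).
have xS' : x \in ~: S by rewrite inE xS.
have := rank_lt_card xS'; rewrite -(ltn_add2l k) => h.
have := cardsC S; rewrite card_ord Sk => e.
by rewrite ifT // (leq_trans h) // e.
Qed.

Lemma relab_inj n k (d : 'I_n) (S : {set 'I_n}) : #|S| = k -> injective (relab k d S).
Proof.
move=> Sk x y /(congr1 val); rewrite !relab_val //.
have hS := @rank_ord_lt n S; have hC := @rank_ord_lt n (~: S).
case xS: (x \in S); case yS: (y \in S) => e.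
- apply/eqP; case: (ltngtP x y) => [lt|lt|eq].
  + by have := hS _ _ xS lt; rewrite e ltnn.
  + by have := hS _ _ yS lt; rewrite e ltnn.
  + by apply/eqP/val_inj.
- have := rank_lt_card xS; by rewrite e Sk ltnNge leq_addr.
- have := rank_lt_card yS; by rewrite -e Sk ltnNge leq_addr.
- move/eqP: e; rewrite eqn_add2l => /eqP e.
  have xS' : x \in ~: S by rewrite inE xS.
  have yS' : y \in ~: S by rewrite inE yS.
  apply/eqP; case: (ltngtP x y) => [lt|lt|eq].
  + by have := hC _ _ xS' lt; rewrite e ltnn.
  + by have := hC _ _ yS' lt; rewrite e ltnn.
  + by apply/eqP/val_inj.
Qed.

Lemma relab_S0 n k (d : 'I_n) (S : {set 'I_n}) x : #|S| = k ->
  (relab k d S x < k) = (x \in S).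
Proof.
move=> Sk; rewrite relab_val //; case xS: (x \in S).
  by rewrite -Sk rank_lt_card.
by rewrite ltnNge leq_addr.
Qed.

Definition unrelab (n k : nat) (d : 'I_n) (S : {set 'I_n}) (y : 'I_n) : 'I_n :=
  odflt d [pick x | relab k d S x == y].

Lemma relabK n k (d : 'I_n) (S : {set 'I_n}) : #|S| = k -> cancel (relab k d S) (unrelab k d S).
Proof.
move=> Sk x; rewrite /unrelab; case: pickP => [y /eqP e | none] /=.
  exact: (relab_inj Sk e).
by have := none x; rewrite eqxx.
Qed.

Lemma unrelabK n k (d : 'I_n) (S : {set 'I_n}) : #|S| = k -> cancel (unrelab k d S) (relab k d S).
Proof.
move=> Sk y.
have [g gK Kg] := injF_bij (@relab_inj _ _ d _ Sk).
rewrite /unrelab; case: pickP => [x /eqP e | none] //=.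
by have := none (g y); rewrite Kg eqxx.
Qed.

Definition imC (j k : nat) (f : colT j k) : {set 'I_(j + k)} :=
  (fun c => f (inr c)) @: [set: 'I_k].

Lemma col_inF j k bG (f : colT j k) :
  f \in proper_colourings (biclique_adj bG) (j + k) ->
  forall x y, biclique_adj bG x y -> f x != f y.
Proof.
rewrite inE => /forallP H x y adj.
by have /forallP := H x => /(_ y) /implyP; apply.
Qed.

Lemma inF_col j k bG (f : colT j k) :
  (forall x y, biclique_adj bG x y -> f x != f y) ->
  f \in proper_colourings (biclique_adj bG) (j + k).
Proof.
move=> H; rewrite inE; apply/forallP => x; apply/forallP => y; apply/implyP; exact: H.
Qed.

Lemma imC_card j k bG (f : colT j k) : (forall x y, biclique_adj bG x y -> f x != f y) ->
  #|imC f| = k.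
Proof.
move=> H; rewrite card_in_imset ?cardsT ?card_ord //.
move=> c c' _ _ e; apply/eqP/negPn/negP => nc.
by have := H (inr c) (inr c') nc; rewrite e eqxx.
Qed.

Lemma card_col_F0 j k (bG : 'I_j -> 'I_k -> bool) (d : 'I_(j + k)) :
  #|proper_colourings (biclique_adj bG) (j + k)| = 'C(j + k, k) * #|F0set bG|.
Proof.
set Col := proper_colourings _ _.
set Ks := [set S : {set 'I_(j + k)} | #|S| == k].
have cKs : #|Ks| = 'C(j + k, k) by rewrite card_draws card_ord.
rewrite -cKs -cardsX.
apply/eqP; rewrite eqn_leq; apply/andP; split.
- pose M1 := fun f : colT j k => (imC f, [ffun x => relab k d (imC f) (f x)]).
  rewrite -(@card_in_imset _ _ M1).
    apply: subset_leq_card; apply/subsetP => p /imsetP [f fC ->].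
    have H := col_inF fC; have Sk := imC_card H.
    rewrite inE /=; apply/andP; split; first by rewrite inE Sk.
    apply/F0setP; split.
      move=> c; rewrite /fv ffunE relab_S0 //.
      by apply/imsetP; exists c.
    move=> x y adj; rewrite !ffunE; apply: contra (H _ _ adj) => /eqP e.
    by rewrite (relab_inj Sk e).
  move=> f g fC gC [eS ef].
  have Sk := imC_card (col_inF fC).
  apply/ffunP => x; move/ffunP: ef => /(_ x); rewrite !ffunE eS.
  by apply: relab_inj; rewrite -eS.
- pose M2 := fun p : {set 'I_(j + k)} * colT j k => [ffun x => unrelab k d p.1 (p.2 x)] : colT j k.
  have M2C : forall p, p \in setX Ks (F0set bG) ->
      [/\ #|p.1| = k, inF0 bG p.2, M2 p \in Col & imC (M2 p) = p.1].
    case=> S g; rewrite inE /= inE => /andP [/eqP Sk /F0setP Hg].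
    have Hp : forall x y, biclique_adj bG x y -> M2 (S, g) x != M2 (S, g) y.
      move=> x y adj; rewrite !ffunE /=.
      apply: contra (proj2 Hg _ _ adj) => /eqP e.
      by rewrite -(unrelabK d Sk (g x)) e unrelabK.
    split => //; first exact: inF_col.
    apply/eqP; rewrite eqEcard; apply/andP; split.
      apply/subsetP => y /imsetP [c _ ->]; rewrite ffunE /=.
      rewrite -(@relab_S0 _ k d S _ Sk) unrelabK //; by case: Hg => Hc _; apply: Hc.
    by rewrite (imC_card Hp) Sk.
  rewrite -(@card_in_imset _ _ M2).
    apply: subset_leq_card; apply/subsetP => f /imsetP [p pX ->].
    by case: (M2C p pX).
  move=> [S g] [S' g'] pX pX' e.
  have [Sk Hg _ iS] := M2C _ pX; have [Sk' Hg' _ iS'] := M2C _ pX'.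
  have eS : S = S' by rewrite /= in iS iS'; rewrite -iS -iS' e.
  subst S'; congr (_, _).
  apply/ffunP => x; move/ffunP: e => /(_ x); rewrite !ffunE /= => e'.
  by rewrite -(unrelabK d Sk (g x)) e' unrelabK.
Qed.

Local Open Scope ring_scope.

Lemma falling_horner (k : nat) (x : rat) :
  (falling_poly k).[x] = \prod_(i < k) (x - i%:R).
Proof.
rewrite /falling_poly horner_prod; apply: eq_bigr => i _.
by rewrite hornerD hornerN hornerX hornerC.
Qed.

Lemma falling_m1 (k : nat) : (falling_poly k).[-1] = (-1) ^+ k * (k`!)%:R.
Proof.
rewrite falling_horner; elim: k => [|k IH]; first by rewrite big_ord0 expr0 mul1r.
rewrite big_ord_recr /= IH exprS factS natrM.
rewrite -opprD -natr1 addrC.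
rewrite mulrN mulN1r mulNr; congr (- _); rewrite -mulrA [_ * (_ + 1)]mulrC mulrA.
by [].
Qed.

Lemma part1 (j k : nat) (PG PH g h : {poly rat}) (c : int) :
     PG = falling_poly k * g ->
     PH = falling_poly k * h ->
     g = (-1) ^+ j *: (h \Po ((c%:~R)%:P - 'X)) ->
     PG.[(c + 1)%:~R] = binz (c + 1) k * (-1) ^+ (j + k) * PH.[-1].
Proof.
move=> -> -> ->.
rewrite !hornerM hornerZ horner_comp falling_m1 falling_horner /binz.
rewrite !(hornerD, hornerN, hornerX, hornerC) intrD.
have -> : (c%:~R - ((c%:~R : rat) + 1%:~R)) = -1 by rewrite opprD addNKr.
have hk : (k`!)%:R != 0 :> rat by rewrite pnatr_eq0 -lt0n fact_gt0.
rewrite exprD.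
set P := \prod_(i < k) _.
rewrite -!mulrA; congr (_ * _).
rewrite [(k`!)%:R^-1 * _]mulrC -!mulrA; congr (_ * _).
by rewrite mulrA -expr2 sqrr_sign mul1r mulrC divfK.
Qed.


Theorem mainTheorem6 (j k : nat) (hj : (1 <= j)%N) (hjk : (j <= k)%N) :
  (forall (bG bH : 'I_j -> 'I_k -> bool) (PG PH g h : {poly rat}) (c : int),
     is_chromatic_poly (biclique_adj bG) PG ->
     is_chromatic_poly (biclique_adj bH) PH ->
     PG = falling_poly k * g ->
     PH = falling_poly k * h ->
     g = (-1) ^+ j *: (h \Po ((c%:~R)%:P - 'X)) ->
     PG.[(c + 1)%:~R] = binz (c + 1) k * (-1) ^+ (j + k) * PH.[-1])
  /\
  (forall bG : 'I_j -> 'I_k -> bool,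
     #|proper_colourings (biclique_adj bG) (j + k)| =
     ('C(j + k, k) * #|acyclic_orientations (biclique_adj (compl_bridges bG))|)%N).
Proof.
split.
- move=> bG bH PG PH g h c _ _; exact: part1.
- move=> bG.
  have jk : (0 < j + k)%N by rewrite addn_gt0 hj.
  pose d : 'I_(j + k) := Ordinal jk.
  by rewrite (card_col_F0 bG d) (card_AO_F0 bG d).
Qed.
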